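(* Let $S$ be an abelian group and let $\{G_j\}_{j\in J}$ be the family of all proper subgroups of $S$. Then for every left $S$-act $A$, the geometric equivalence class $[A]=\{B: B\overset{\triangle}{\sim}A\}$ has a representation of exactly one of the following three types: (i) $[A]=\big[\coprod_{k\in K}\overline{G_k}\big]$ for some $K\subseteq J$; (ii) $[A]=\big[\coprod_{k\in K}\overline{G_k}\amalg z\big]$ for some $K\subseteq J$; (iii) $[A]=\big[\coprod_{k\in K}\overline{G_k}\amalg z_1\amalg z_2\big]$ for some $K\subseteq J$. (That is, $A$ is geometrically equivalent to an $S$-act of one of these forms, and $[A]$ does not admit representations of two different types.)
   Context: For a monoid $S$, a left $S$-act is a nonempty set $A$ with a map $S\times A\to A$, $(s,a)\mapsto sa$, such that $1a=a$ and $(st)a=s(ta)$; homomorphisms are maps $f$ with $f(sa)=sf(a)$. Coproducts $\amalg$ of $S$-acts are disjoint unions with the induced action. For a nonempty finite set $X$, $F_X=\coprod_{x\in X}S_x$ is the free $S$-act on $X$ (a disjoint union of copies of the left regular act ${}_SS$). For an $S$-act $G$ and a relation $T\subseteq F_X\times F_X$, let $T'_G=\{\mu:F_X\to G \text{ homomorphism}: T\subseteq\ker\mu\}$ and $T''_G=\bigcap_{\mu\in T'_G}\ker\mu$ (empty intersection $=F_X\times F_X$). $G_1\overset{\triangle}{\sim}G_2$ (geometric equivalence) iff $T''_{G_1}=T''_{G_2}$ for every nonempty finite $X$ and every $T\subseteq F_X\times F_X$. For a subgroup $H$ of $S$, $\overline{H}=S/H$ is the $S$-act of cosets $tH$ with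 $s\cdot tH=stH$. The symbols $z,z_1,z_2$ denote one-element $S$-acts. *)

(* Defs.v *)
From Stdlib Require Import FunctionalExtensionality PropExtensionality ProofIrrelevance.
From mathcomp Require Import all_boot.

Set Implicit Arguments.
Unset Strict Implicit.
Unset Printing Implicit Defensive.

Record monoid := Monoid {
  mcar :> Type;
  mmul : mcar -> mcar -> mcar;
  mone : mcar;
  mmulA : forall x y z, mmul x (mmul y z) = mmul (mmul x y) z;
  mmul1 : forall x, mmul mone x = x;
  mmulr1 : forall x, mmul x mone = x }.

Arguments mmul {m}.
Arguments mone {m}.

Definition is_group (S : monoid) : Prop :=
  forall x : S, exists y : S, mmul x y = mone /\ mmul y x = mone.
Definition is_commutative (S : monoid) : Prop :=
  forall x y : S, mmul x y = mmul y x.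

Definition is_subgroup (S : monoid) (H : S -> Prop) : Prop :=
  [/\ H mone,
      (forall x y, H x -> H y -> H (mmul x y)) &
      (forall x y, H x -> mmul x y = mone -> H y)].
Definition is_proper_subgroup (S : monoid) (H : S -> Prop) : Prop :=
  is_subgroup H /\ exists s, ~ H s.

(* Left S-acts (data + action axioms).  Nonemptiness of the carrier is
   stated separately (predicate [nonempty_act]). *)
Record sact (S : monoid) := SAct {
  acar :> Type;
  aop : S -> acar -> acar;
  aop1 : forall a, aop mone a = a;
  aopM : forall s t a, aop (mmul s t) a = aop s (aop t a) }.

Arguments aop {S} _ _ _.

Definition nonempty_act (S : monoid) (A : sact S) : Prop := inhabited A.

(* Homomorphisms F_X -> B, where F_X = X x S with s.(x,t) = (x, s t)
   is the free S-act on X (disjoint union of copies of _S S). *)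
Definition is_hom_free (S : monoid) (X : Type) (B : sact S) (mu : X * S -> B) : Prop :=
  forall (x : X) (s t : S), mu (x, mmul s t) = aop B s (mu (x, t)).

(* T''_B = intersection of ker mu over all homs mu : F_X -> B with T <= ker mu. *)
Definition Tclos (S : monoid) (X : Type) (B : sact S)
    (T : X * S -> X * S -> Prop) (p q : X * S) : Prop :=
  forall mu : X * S -> B, is_hom_free mu ->
    (forall a b, T a b -> mu a = mu b) -> mu p = mu q.

Definition geom_equiv (S : monoid) (A B : sact S) : Prop :=
  forall (X : finType), (0 < #|X|)%N ->
  forall (T : X * S -> X * S -> Prop) (p q : X * S),
    Tclos A T p q <-> Tclos B T p q.

Definition lcoset (S : monoid) (H : S -> Prop) (t : S) : S -> Prop :=
  fun u => exists h, H h /\ u = mmul t h.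

Definition coset_car (S : monoid) (H : S -> Prop) : Type :=
  { C : S -> Prop | exists t, C = lcoset H t }.

Definition pred_act (S : monoid) (s : S) (C : S -> Prop) : S -> Prop :=
  fun u => exists v, C v /\ u = mmul s v.

Lemma pred_act_lcoset (S : monoid) (H : S -> Prop) (s t : S) :
  pred_act s (lcoset H t) = lcoset H (mmul s t).
Proof.
apply: functional_extensionality => u; apply: propositional_extensionality.
split.
- move=> [v [[h [Hh ->]] ->]]; exists h; split => //; by rewrite mmulA.
- move=> [h [Hh ->]]; exists (mmul t h); split; first by exists h.
  by rewrite mmulA.
Qed.

Lemma pred_act_coset (S : monoid) (H : S -> Prop) (s : S) (C : S -> Prop) :
  (exists t, C = lcoset H t) -> exists t, pred_act s C = lcoset H t.
Proof. move=> [t ->]; exists (mmul s t); exact: pred_act_lcoset. Qed.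

Definition coset_op (S : monoid) (H : S -> Prop) (s : S) (c : coset_car H) :
  coset_car H :=
  exist _ (pred_act s (proj1_sig c)) (pred_act_coset s (proj2_sig c)).

Lemma coset_op1 (S : monoid) (H : S -> Prop) (c : coset_car H) :
  coset_op mone c = c.
Proof.
case: c => C pC; apply: subset_eq_compat => /=.
apply: functional_extensionality => u; apply: propositional_extensionality.
split; first by move=> [v [Cv ->]]; rewrite mmul1.
by move=> Cu; exists u; rewrite mmul1.
Qed.

Lemma coset_opM (S : monoid) (H : S -> Prop) (s t : S) (c : coset_car H) :
  coset_op (mmul s t) c = coset_op s (coset_op t c).
Proof.
case: c => C pC; apply: subset_eq_compat => /=.
apply: functional_extensionality => u; apply: propositional_extensionality.
split.
- move=> [v [Cv ->]]; exists (mmul t v); split; first by exists v.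
  by rewrite mmulA.
- move=> [w [[v [Cv ->]] ->]]; exists v; split => //; by rewrite mmulA.
Qed.

Definition coset_act (S : monoid) (H : S -> Prop) : sact S :=
  SAct (@coset_op1 S H) (@coset_opM S H).

Section Coprod.
Variables (S : monoid) (I : Type) (F : I -> sact S).

Definition coprod_op (s : S) (a : {i : I & F i}) : {i : I & F i} :=
  existT _ (projT1 a) (aop (F (projT1 a)) s (projT2 a)).

Lemma coprod_op1 a : coprod_op mone a = a.
Proof. by case: a => i x; rewrite /coprod_op /= aop1. Qed.

Lemma coprod_opM s t a : coprod_op (mmul s t) a = coprod_op s (coprod_op t a).
Proof. by case: a => i x; rewrite /coprod_op /= aopM. Qed.

Definition coprod_act : sact S := SAct coprod_op1 coprod_opM.
End Coprod.

Section Sum.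
Variables (S : monoid) (A B : sact S).

Definition sum_op (s : S) (x : A + B) : A + B :=
  match x with inl a => inl (aop A s a) | inr b => inr (aop B s b) end.

Lemma sum_op1 x : sum_op mone x = x.
Proof. by case: x => a /=; rewrite aop1. Qed.

Lemma sum_opM s t x : sum_op (mmul s t) x = sum_op s (sum_op t x).
Proof. by case: x => a /=; rewrite aopM. Qed.

Definition sum_act : sact S := SAct sum_op1 sum_opM.
End Sum.

Definition one_act (S : monoid) : sact S :=
  @SAct S unit (fun _ u => u) (fun _ => erefl) (fun _ _ _ => erefl).

Definition cosets_coprod (S : monoid) (K : (S -> Prop) -> Prop) : sact S :=
  @coprod_act S {H : S -> Prop | K H} (fun i => coset_act (proj1_sig i)).

Definition subset_proper (S : monoid) (K : (S -> Prop) -> Prop) : Prop :=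
  forall H, K H -> is_proper_subgroup H.

Definition rep_type1 (S : monoid) (A : sact S) : Prop :=
  exists K, [/\ subset_proper K, (exists H, K H) &
                geom_equiv A (cosets_coprod K)].
Definition rep_type2 (S : monoid) (A : sact S) : Prop :=
  exists K, subset_proper K /\
            geom_equiv A (sum_act (cosets_coprod K) (one_act S)).
Definition rep_type3 (S : monoid) (A : sact S) : Prop :=
  exists K, subset_proper K /\
            geom_equiv A (sum_act (cosets_coprod K)
                                  (sum_act (one_act S) (one_act S))).

(* Main.v *)
Require Import Defs.
From mathcomp Require Import all_boot.
From Stdlib Require Import Classical ClassicalEpsilon FunctionalExtensionality PropExtensionality ProofIrrelevance.

Definition fixedp {S : monoid} {A : sact S} (b : A) : Prop := forall s, aop A s b = b.
Definition stab {S : monoid} {A : sact S} (b : A) : S -> Prop := fun s => aop A s b = b.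
Definition is_hom {S : monoid} {A B : sact S} (f : A -> B) : Prop :=
  forall s a, f (aop A s a) = aop B s (f a).

Lemma hom_free_eval (S : monoid) (X : Type) (B : sact S) (mu : X * S -> B) x t :
  is_hom_free mu -> mu (x, t) = aop B t (mu (x, mone)).
Proof. by move=> H; rewrite -H mmulr1. Qed.
Arguments hom_free_eval {S X B mu} x t.

Definition mu_of {S : monoid} {X : Type} {B : sact S} (b : X -> B) : X * S -> B :=
  fun p => aop B p.2 (b p.1).

Lemma mu_of_hom (S : monoid) (X : Type) (B : sact S) (b : X -> B) : is_hom_free (mu_of b).
Proof. by move=> x s t; rewrite /mu_of /= aopM. Qed.
Arguments mu_of_hom {S X B} b.

Lemma sep_Tclos (S : monoid) (A B : sact S) :
  (forall a a' : A, a <> a' -> exists f : A -> B, is_hom f /\ f a <> f a') ->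
  forall (X : Type) T p q, @Tclos S X B T p q -> @Tclos S X A T p q.
Proof.
move=> Hs X T p q HB mu hmu hT.
apply: NNPP => ne; have [f [hf fne]] := Hs _ _ ne; apply: fne.
apply: (HB (fun z => f (mu z))).
- by move=> x s t; rewrite hmu hf.
- by move=> a b /hT ->.
Qed.

Lemma geq_of_sep (S : monoid) (A B : sact S) :
  (forall a a' : A, a <> a' -> exists f : A -> B, is_hom f /\ f a <> f a') ->
  (forall a a' : B, a <> a' -> exists f : B -> A, is_hom f /\ f a <> f a') ->
  geom_equiv A B.
Proof. move=> H1 H2 X _ T p q; split; [exact: sep_Tclos | exact: sep_Tclos]. Qed.

Lemma L1 (S : monoid) (B : sact S) (s : S) :
  @Tclos S unit B (fun _ _ => False) (tt, mone) (tt, s) <-> forall b : B, aop B s b = b.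
Proof.
split.
- move=> H b; have := H (mu_of (fun _ => b)) (mu_of_hom _) (fun _ _ F => False_ind _ F).
  by rewrite /mu_of /= aop1.
- move=> H mu hmu _; by rewrite (hom_free_eval _ s hmu) H.
Qed.

Lemma L2 (S : monoid) (B : sact S) :
  @Tclos S bool B (fun a b => a.1 = b.1 /\ a.2 = mone) (false, mone) (true, mone) <->
  (forall e e' : B, fixedp e -> fixedp e' -> e = e').
Proof.
split.
- move=> H e e' fe fe'.
  have := H (mu_of (fun x : bool => if x then e' else e)) (mu_of_hom _).
  rewrite /mu_of /= !aop1; apply.
  by move=> [x u] [y v] /= [<- ->]; case: x; rewrite aop1 ?fe ?fe'.
- move=> H mu hmu hT; apply: H => s.
  + by rewrite -hom_free_eval //; symmetry; apply: hT.
  + by rewrite -hom_free_eval //; symmetry; apply: hT.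
Qed.

Lemma L3 (S : monoid) (B : sact S) (s : S) :
  @Tclos S bool B (fun a b => a.1 = false /\ b.1 = false /\ a.2 = mone) (true, mone) (true, s) <->
  ((exists e : B, fixedp e) -> forall b : B, aop B s b = b).
Proof.
split.
- move=> H [e fe] b.
  have := H (mu_of (fun x : bool => if x then b else e)) (mu_of_hom _).
  rewrite /mu_of /= !aop1 => h; symmetry; apply: h.
  by move=> [x u] [y v] /= [-> [-> ->]]; rewrite aop1 fe.
- move=> H mu hmu hT; rewrite (hom_free_eval _ s hmu) H //.
  exists (mu (false, mone)) => t; rewrite -hom_free_eval //; symmetry; exact: hT.
Qed.


Lemma act_cancel {S : monoid} (HG : is_group S) (A : sact S) t (a b : A) :
  aop A t a = aop A t b -> a = b.
Proof.
move=> e; have [y [h1 h2]] := HG t.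
by rewrite -(aop1 a) -(aop1 b) -h2 !aopM e.
Qed.

Lemma stab_tr {S : monoid} (HG : is_group S) (HC : is_commutative S) (A : sact S)
  (t s : S) (r : A) : aop A s (aop A t r) = aop A t r <-> aop A s r = r.
Proof.
split.
- by move=> e; apply: (@act_cancel _ HG _ t); rewrite -aopM HC aopM e.
- by move=> e; rewrite -aopM HC aopM e.
Qed.

Lemma stab_trE {S : monoid} (HG : is_group S) (HC : is_commutative S) (A : sact S)
  (t : S) (r : A) : stab (aop A t r) = stab r.
Proof.
apply: functional_extensionality => s; apply: propositional_extensionality.
exact: stab_tr.
Qed.

Lemma fixed_tr {S : monoid} (HG : is_group S) (HC : is_commutative S) (A : sact S)
  (t : S) (r : A) : fixedp (aop A t r) <-> fixedp r.
Proof.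
split=> H s; [exact: (proj1 (stab_tr HG HC _ t s r) (H s)) | exact: (proj2 (stab_tr HG HC _ t s r) (H s))].
Qed.

Lemma lcoset_mem {S : monoid} (H : S -> Prop) t : H mone -> lcoset H t t.
Proof. by move=> h1; exists mone; rewrite mmulr1. Qed.

Lemma lcoset_act {S : monoid} (A : sact S) (a : A) t t' :
  lcoset (stab a) t = lcoset (stab a) t' -> aop A t a = aop A t' a.
Proof.
move=> e; have : lcoset (stab a) t t' by rewrite e; apply: lcoset_mem; exact: aop1.
by move=> [h [hh ->]]; rewrite aopM hh.
Qed.

Lemma act_lcoset {S : monoid} (HG : is_group S) (HC : is_commutative S) (A : sact S) (a : A) t t' :
  aop A t a = aop A t' a -> lcoset (stab a) t = lcoset (stab a) t'.
Proof.
have gen : forall t t', aop A t a = aop A t' a -> forall u, lcoset (stab a) t u -> lcoset (stab a) t' u.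
  move=> {}t {}t' e u [h [hh ->]].
  have [y [h1 h2]] := HG t'.
  exists (mmul y (mmul t h)); split.
  - rewrite /stab !aopM hh e -aopM h2 aop1 //.
  - by rewrite mmulA h1 mmul1.
move=> e; apply: functional_extensionality => u; apply: propositional_extensionality.
split; apply: gen => //.
Qed.

Lemma stab_subgroup {S : monoid} (HC : is_commutative S) (A : sact S) (a : A) :
  is_subgroup (stab a).
Proof.
split.
- exact: aop1.
- by move=> x y hx hy; rewrite /stab aopM hy hx.
- by move=> x y hx e; rewrite /stab -{1}hx -aopM HC e aop1.
Qed.

Definition Kset {S : monoid} (A : sact S) : (S -> Prop) -> Prop :=
  fun H => exists a : A, H = stab a /\ exists s, aop A s a <> a.

Lemma Kset_proper {S : monoid} (HC : is_commutative S) (A : sact S) : subset_proper (Kset A).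
Proof.
move=> H [a [-> [s hs]]]; split; first exact: stab_subgroup.
by exists s.
Qed.

Lemma coprod_nofix {S : monoid} (HG : is_group S) (HC : is_commutative S)
  (K : (S -> Prop) -> Prop) (HK : subset_proper K) (x : cosets_coprod K) :
  ~ fixedp x.
Proof.
case: x => [[H kH] [C [t eC]]] fx.
have [[h1 _ _] [s hs]] := HK H kH.
have := fx s; rewrite /= /coprod_op /= => e.
have := congr1 (fun z => proj1_sig (projT2 z)) e; rewrite /= eC pred_act_lcoset => e2.
have : lcoset H t (mmul s t) by rewrite -e2; apply: lcoset_mem.
move=> [h [hh eh]]; apply: hs.
have [y [y1 y2]] := HG t.
suff -> : s = h by [].
transitivity (mmul (mmul y t) s); first by rewrite y2 mmul1.
by rewrite -mmulA (HC t s) eh mmulA y2 mmul1.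
Qed.


Arguments coprod_nofix {S} HG HC {K} HK x.

Lemma transfer {S : monoid} (A B1 B2 : sact S) (X : finType) (hX : (0 < #|X|)%N) T p q :
  geom_equiv A B1 -> geom_equiv A B2 -> @Tclos S X B1 T p q -> @Tclos S X B2 T p q.
Proof. by move=> e1 e2 h; apply/(e2 X hX); apply/(e1 X hX). Qed.


Definition P2 {S : monoid} (B : sact S) := forall e e' : B, fixedp e -> fixedp e' -> e = e'.
Definition P3 {S : monoid} (B : sact S) s := (exists e : B, fixedp e) -> forall b : B, aop B s b = b.
Definition P1 {S : monoid} (B : sact S) s := forall b : B, aop B s b = b.

Lemma trP1 {S : monoid} (A B1 B2 : sact S) s :
  geom_equiv A B1 -> geom_equiv A B2 -> P1 B1 s -> P1 B2 s.
Proof. move=> e1 e2 /L1 h; apply/L1; apply: (@transfer _ A B1 B2 unit _ _ _ _ e1 e2 h).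
by rewrite card_unit. Qed.
Lemma trP2 {S : monoid} (A B1 B2 : sact S) :
  geom_equiv A B1 -> geom_equiv A B2 -> P2 B1 -> P2 B2.
Proof. move=> e1 e2 /L2 h; apply/L2; apply: (@transfer _ A B1 B2 bool _ _ _ _ e1 e2 h).
by rewrite card_bool. Qed.
Lemma trP3 {S : monoid} (A B1 B2 : sact S) s :
  geom_equiv A B1 -> geom_equiv A B2 -> P3 B1 s -> P3 B2 s.
Proof. move=> e1 e2 /L3 h; apply/L3; apply: (@transfer _ A B1 B2 bool _ _ _ _ e1 e2 h).
by rewrite card_bool. Qed.

Arguments trP1 {S A B1 B2 s}.
Arguments trP2 {S A B1 B2}.
Arguments trP3 {S A B1 B2 s}.

Lemma sum_inl_nofix {S : monoid} (HG : is_group S) (HC : is_commutative S)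
  (K : (S -> Prop) -> Prop) (HK : subset_proper K) (B : sact S)
  (x : cosets_coprod K) : ~ @fixedp S (sum_act (cosets_coprod K) B) (inl x).
Proof.
move=> fx; apply: (coprod_nofix HG HC HK x) => s.
by have := fx s; case.
Qed.

Arguments sum_inl_nofix {S} HG HC {K} HK {B} x.

Lemma exclusive {S : monoid} (HG : is_group S) (HC : is_commutative S) (A : sact S) :
  ~ (rep_type1 A /\ rep_type2 A) /\
  ~ (rep_type1 A /\ rep_type3 A) /\
  ~ (rep_type2 A /\ rep_type3 A).
Proof.
have P2_1 : forall K : (S -> Prop) -> Prop, subset_proper K -> P2 (cosets_coprod K).
  by move=> K HK e e' fe; case: (coprod_nofix HG HC HK _ fe).
have P3_1 : forall (K : (S -> Prop) -> Prop) s, subset_proper K -> P3 (cosets_coprod K) s.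
  by move=> K s HK [e fe]; case: (coprod_nofix HG HC HK _ fe).
have P2_2 : forall K : (S -> Prop) -> Prop, subset_proper K -> P2 (sum_act (cosets_coprod K) (one_act S)).
  move=> K HK [x|[]] [y|[]] f1 f2 //.
  - by case: (sum_inl_nofix HG HC HK _ f1).
  - by case: (sum_inl_nofix HG HC HK _ f1).
  - by case: (sum_inl_nofix HG HC HK _ f2).
have nP2_3 : forall K : (S -> Prop) -> Prop, ~ P2 (sum_act (cosets_coprod K) (sum_act (one_act S) (one_act S))).
  by move=> K h; have := h (inr (inl tt)) (inr (inr tt)) (fun _ => erefl) (fun _ => erefl).
split; [|split].
- move=> [[K1 [HK1 [H kH] e1]] [K2 [HK2 e2]]].
  pose x : cosets_coprod K1 := existT _ (exist K1 H kH) (exist _ (lcoset H mone) (ex_intro _ mone erefl)).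
  have [s hs] := not_all_ex_not _ _ (coprod_nofix HG HC HK1 x).
  apply: hs.
  have h3 := trP3 e1 e2 (P3_1 K1 s HK1).
  have h1 : P1 (sum_act (cosets_coprod K2) (one_act S)) s.
    by apply: h3; exists (inr tt).
  exact: (trP1 e2 e1 h1).
- move=> [[K1 [HK1 _ e1]] [K3 [HK3 e3]]].
  exact: (nP2_3 K3 (trP2 e1 e3 (P2_1 K1 HK1))).
- move=> [[K2 [HK2 e2]] [K3 [HK3 e3]]].
  exact: (nP2_3 K3 (trP2 e2 e3 (P2_2 K2 HK2))).
Qed.


Definition ai {S : monoid} {A : sact S} (i : {H : S -> Prop | Kset A H}) : A :=
  proj1_sig (constructive_indefinite_description _ (proj2_sig i)).
Lemma ai_spec {S : monoid} {A : sact S} (i : {H : S -> Prop | Kset A H}) :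
  proj1_sig i = stab (ai i) /\ exists s, aop A s (ai i) <> ai i.
Proof. rewrite /ai; case: constructive_indefinite_description => a //. Qed.

Definition tc {S : monoid} {H : S -> Prop} (C : coset_car H) : S :=
  proj1_sig (constructive_indefinite_description _ (proj2_sig C)).
Lemma tc_spec {S : monoid} {H : S -> Prop} (C : coset_car H) :
  proj1_sig C = lcoset H (tc C).
Proof. rewrite /tc; case: constructive_indefinite_description => a //. Qed.

Definition Fmap {S : monoid} {A : sact S} (x : cosets_coprod (Kset A)) : A :=
  aop A (tc (projT2 x)) (ai (projT1 x)).

Lemma Fmap_hom {S : monoid} (A : sact S) : is_hom (@Fmap S A).
Proof.
move=> s [i C]; rewrite /Fmap /= -aopM.
have [eH _] := ai_spec i.
apply: lcoset_act; rewrite -eH -!tc_spec /=.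
by rewrite tc_spec pred_act_lcoset.
Qed.

Lemma Fmap_nofix {S : monoid} (HG : is_group S) (HC : is_commutative S) (A : sact S)
  (x : cosets_coprod (Kset A)) : ~ fixedp (Fmap x).
Proof.
rewrite /Fmap => /(fixed_tr HG HC) fx.
have [_ [s hs]] := ai_spec (projT1 x); exact: hs.
Qed.

Lemma Fmap_inj {S : monoid} (HG : is_group S) (HC : is_commutative S) (A : sact S)
  (x y : cosets_coprod (Kset A)) : Fmap x = Fmap y -> x = y.
Proof.
case: x => i C; case: y => j D; rewrite /Fmap /= => e.
have [ei _] := ai_spec i; have [ej _] := ai_spec j.
have eij : i = j.
  apply: eq_sig_hprop; first by move=> ? ? ?; apply: proof_irrelevance.
  by rewrite ei ej -(stab_trE HG HC _ (tc C)) e stab_trE.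
subst j.
have eCD : C = D.
  apply: eq_sig_hprop; first by move=> ? ? ?; apply: proof_irrelevance.
  rewrite !tc_spec; move: (tc C) (tc D) e => t t' e; rewrite ei; exact: act_lcoset.
by rewrite eCD.
Qed.


Definition orb {S : monoid} {A : sact S} (b : A) : A -> Prop :=
  fun c => exists t, aop A t c = b.

Lemma orb_act {S : monoid} (HG : is_group S) (A : sact S) s (b : A) :
  orb (aop A s b) = orb b.
Proof.
apply: functional_extensionality => c; apply: propositional_extensionality.
split=> [[t e]|[t e]].
- have [y [h1 h2]] := HG s; exists (mmul y t).
  by rewrite aopM e -aopM h2 aop1.
- by exists (mmul s t); rewrite aopM e.
Qed.

Definition Cset {S : monoid} {A : sact S} (rho : A -> A) (b : A) : S -> Prop :=
  fun u => aop A u (rho b) = b.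

Lemma Cset_coset {S : monoid} (HG : is_group S) (HC : is_commutative S) (A : sact S)
  (rho : A -> A) (P2 : forall b, orb b (rho b)) (b : A) :
  exists t, Cset rho b = lcoset (stab (rho b)) t.
Proof.
have [t et] := P2 b; exists t.
apply: functional_extensionality => u; apply: propositional_extensionality.
rewrite /Cset; split.
- move=> eu; have eL := act_lcoset HG HC _ (rho b) u t (ltac:(by rewrite eu et)).
  rewrite -eL.
  apply: lcoset_mem; exact: aop1.
- by move=> [h [hh ->]]; rewrite aopM hh.
Qed.

Arguments Cset_coset {S} HG HC {A rho} P2 b.

Lemma K_stab {S : monoid} (HG : is_group S) (HC : is_commutative S) (A : sact S)
  (rho : A -> A) (P2 : forall b, orb b (rho b)) (b : A) (nf : ~ fixedp b) :
  Kset A (stab (rho b)).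
Proof.
exists (rho b); split => //.
apply: not_all_ex_not => fr; apply: nf.
have [t <-] := P2 b; exact/(fixed_tr HG HC).
Qed.

Arguments K_stab {S} HG HC {A rho} P2 {b} nf.

Definition hcore {S : monoid} (HG : is_group S) (HC : is_commutative S) (A : sact S)
  (rho : A -> A) (P2 : forall b, orb b (rho b)) (b : A) (nf : ~ fixedp b) :
  cosets_coprod (Kset A) :=
  existT (fun i : {H : S -> Prop | Kset A H} => coset_act (proj1_sig i))
    (exist _ (stab (rho b)) (K_stab HG HC P2 nf))
    (exist _ (Cset rho b) (Cset_coset HG HC P2 b)).

Arguments hcore {S} HG HC {A rho} P2 {b} nf.

Lemma mk_eq {S : monoid} (K : (S -> Prop) -> Prop) (H H' : S -> Prop) (e : H = H')
  (pk : K H) (pk' : K H') (C C' : S -> Prop) (eC : C = C') pc pc' :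
  (existT (fun i : {H : S -> Prop | K H} => coset_act (proj1_sig i))
     (exist _ H pk) (exist _ C pc) : cosets_coprod K) =
  existT (fun i : {H : S -> Prop | K H} => coset_act (proj1_sig i))
     (exist _ H' pk') (exist _ C' pc').
Proof.
subst H' C'; rewrite (proof_irrelevance _ pk pk').
by rewrite (proof_irrelevance _ pc pc').
Qed.

Lemma hcore_hom {S : monoid} (HG : is_group S) (HC : is_commutative S) (A : sact S)
  (rho : A -> A) (P2 : forall b, orb b (rho b))
  (P1 : forall s b, rho (aop A s b) = rho b) s b nf nf' :
  hcore HG HC P2 (b := aop A s b) nf' = aop _ s (hcore HG HC P2 (b := b) nf).
Proof.
rewrite /hcore /= /coprod_op /= /coset_op /=.
apply: mk_eq; first by rewrite P1.
apply: functional_extensionality => u; apply: propositional_extensionality.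
rewrite /Cset /pred_act P1; split.
- move=> eu; have [y [h1 h2]] := HG s.
  exists (mmul y u); split; first by rewrite aopM eu -aopM h2 aop1.
  by rewrite mmulA h1 mmul1.
- by move=> [v [ev ->]]; rewrite aopM ev.
Qed.

Lemma hcore_sep {S : monoid} (HG : is_group S) (HC : is_commutative S) (A : sact S)
  (rho : A -> A) (P2 : forall b, orb b (rho b)) (a a' : A) nf nf' :
  rho a = a -> rho a' <> a' ->
  hcore HG HC P2 (b := a) nf <> hcore HG HC P2 (b := a') nf'.
Proof.
move=> ra ra' e.
have := congr1 (fun z : cosets_coprod (Kset A) => proj1_sig (projT2 z) mone) e.
rewrite /= /Cset ra !aop1 => e2.
by apply: ra'; rewrite -e2.
Qed.


Definition gmap {S : monoid} (HG : is_group S) (HC : is_commutative S) {A : sact S}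
  {rho : A -> A} (P2 : forall b, orb b (rho b)) {Bt : sact S}
  (fx : forall b : A, fixedp b -> Bt) (inj : cosets_coprod (Kset A) -> Bt) (b : A) : Bt :=
  match excluded_middle_informative (fixedp b) with
  | left f => fx b f
  | right nf => inj (hcore HG HC P2 nf)
  end.

Lemma gmap_hom {S : monoid} (HG : is_group S) (HC : is_commutative S) {A : sact S}
  {rho : A -> A} (P2 : forall b, orb b (rho b))
  (P1 : forall s b, rho (aop A s b) = rho b) {Bt : sact S}
  (fx : forall b : A, fixedp b -> Bt) (inj : cosets_coprod (Kset A) -> Bt) :
  (forall s b f f', fx (aop A s b) f' = aop Bt s (fx b f)) -> is_hom inj ->
  is_hom (gmap HG HC P2 fx inj).
Proof.
move=> hfx hinj s b; rewrite /gmap.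
destruct (excluded_middle_informative (fixedp (aop A s b))) as [f'|nf'];
destruct (excluded_middle_informative (fixedp b)) as [f|nf].
- exact: hfx.
- by case: nf; move: f' => /(fixed_tr HG HC).
- by case: nf'; apply/(fixed_tr HG HC).
- by rewrite (hcore_hom HG HC _ _ P2 P1 s b nf nf') hinj.
Qed.

Definition rho0 {S : monoid} {A : sact S} (HA : inhabited A) (a a' : A) (s0 : S) (b : A) : A :=
  let O := orb b in
  if excluded_middle_informative (O a) then a
  else if excluded_middle_informative (O a') then aop A s0 a'
  else epsilon HA O.

Lemma rho0_P1 {S : monoid} (HG : is_group S) {A : sact S} (HA : inhabited A) a a' s0 s (b : A) :
  rho0 HA a a' s0 (aop A s b) = rho0 HA a a' s0 b.
Proof. by rewrite /rho0 (orb_act HG). Qed.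

Lemma rho0_P2 {S : monoid} (HG : is_group S) {A : sact S} (HA : inhabited A) a a' s0 (b : A) :
  orb b (rho0 HA a a' s0 b).
Proof.
rewrite /rho0 /=.
destruct (excluded_middle_informative (orb b a)) as [h|h] => //.
destruct (excluded_middle_informative (orb b a')) as [[t et]|h'].
- have [y [h1 h2]] := HG s0; exists (mmul t y).
  by rewrite -aopM -mmulA h2 mmulr1.
- apply: epsilon_spec; exists b; exists mone; exact: aop1.
Qed.

Lemma rho0_a {S : monoid} {A : sact S} (HA : inhabited A) a a' s0 :
  rho0 HA a a' s0 a = a.
Proof.
rewrite /rho0 /=.
destruct (excluded_middle_informative (orb a a)) as [h|h] => //.
by case: h; exists mone; exact: aop1.
Qed.

Lemma rho0_a' {S : monoid} {A : sact S} (HA : inhabited A) (a a' : A) s0 :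
  a <> a' -> aop A s0 a' <> a' -> rho0 HA a a' s0 a' <> a'.
Proof.
move=> ne hs; rewrite /rho0 /=.
destruct (excluded_middle_informative (orb a' a)) as [h|h] => //.
destruct (excluded_middle_informative (orb a' a')) as [h'|h'] => //.
by case: h'; exists mone; exact: aop1.
Qed.


Lemma get_s0 {S : monoid} {A : sact S} (a' : A) :
  exists s0, ~ fixedp a' -> aop A s0 a' <> a'.
Proof.
case: (classic (fixedp a')) => [f|nf]; first by exists mone.
have [s hs] := not_all_ex_not _ _ nf; by exists s.
Qed.

Lemma core_sep {S : monoid} (HG : is_group S) (HC : is_commutative S) {A : sact S}
  (HA : inhabited A) (a a' : A) s0 (ne : a <> a') (hs0 : ~ fixedp a' -> aop A s0 a' <> a')
  nf nf' :
  hcore HG HC (rho0_P2 HG HA a a' s0) (b := a) nf <>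
  hcore HG HC (rho0_P2 HG HA a a' s0) (b := a') nf'.
Proof.
apply: hcore_sep; first exact: rho0_a.
apply: rho0_a' => //; exact: hs0.
Qed.

Lemma type1_geq {S : monoid} (HG : is_group S) (HC : is_commutative S) (A : sact S)
  (HA : inhabited A) (nofix : forall b : A, ~ fixedp b) :
  geom_equiv A (cosets_coprod (Kset A)).
Proof.
apply: geq_of_sep.
- move=> a a' ne; have [s0 hs0] := get_s0 a'.
  exists (gmap HG HC (rho0_P2 HG HA a a' s0) (fun b f => False_rect _ (nofix b f)) id).
  split.
  + apply: gmap_hom; first exact: rho0_P1.
    * by move=> s b f; case: (nofix b f).
    * by [].
  + rewrite /gmap.
    destruct (excluded_middle_informative (fixedp a)) as [f|nf]; first by case: (nofix a f).
    destruct (excluded_middle_informative (fixedp a')) as [f'|nf']; first by case: (nofix a' f').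
    exact: core_sep.
- move=> x y ne; exists Fmap; split; first exact: Fmap_hom.
  by move/(Fmap_inj HG HC).
Qed.

Definition F2 {S : monoid} {A : sact S} (e : A) (x : sum_act (cosets_coprod (Kset A)) (one_act S)) : A :=
  match x with inl y => Fmap y | inr _ => e end.

Lemma type2_geq {S : monoid} (HG : is_group S) (HC : is_commutative S) (A : sact S)
  (HA : inhabited A) (e : A) (fe : fixedp e) (uniq : forall b : A, fixedp b -> b = e) :
  geom_equiv A (sum_act (cosets_coprod (Kset A)) (one_act S)).
Proof.
apply: geq_of_sep.
- move=> a a' ne; have [s0 hs0] := get_s0 a'.
  exists (gmap HG HC (rho0_P2 HG HA a a' s0)
            (fun _ _ => (inr tt : sum_act (cosets_coprod (Kset A)) (one_act S))) inl).
  split.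
  + apply: gmap_hom; first exact: rho0_P1.
    * by [].
    * by [].
  + rewrite /gmap.
    destruct (excluded_middle_informative (fixedp a)) as [f|nf];
    destruct (excluded_middle_informative (fixedp a')) as [f'|nf'] => //.
    * by case: ne; rewrite (uniq a f) (uniq a' f').
    * move=> h; apply: (core_sep HG HC HA _ _ _ ne hs0 nf nf').
      exact: (f_equal (fun z => match z with inl y => y | inr _ => hcore HG HC (rho0_P2 HG HA a a' s0) nf end) h).
- move=> x y ne; exists (F2 e); split.
  + move=> s [z|[]] /=; [exact: Fmap_hom | by rewrite fe].
  + move: ne; case: x => [x|[]]; case: y => [y|[]] //= ne.
    * move=> /(Fmap_inj HG HC) exy; by case: ne; rewrite exy.
    * move=> ex; apply: (Fmap_nofix HG HC _ x); by rewrite ex.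
    * move=> ey; apply: (Fmap_nofix HG HC _ y); by rewrite -ey.
Qed.

Definition F3 {S : monoid} {A : sact S} (e1 e2 : A)
  (x : sum_act (cosets_coprod (Kset A)) (sum_act (one_act S) (one_act S))) : A :=
  match x with inl y => Fmap y | inr (inl _) => e1 | inr (inr _) => e2 end.

Lemma type3_geq {S : monoid} (HG : is_group S) (HC : is_commutative S) (A : sact S)
  (HA : inhabited A) (e1 e2 : A) (f1 : fixedp e1) (f2 : fixedp e2) (ne12 : e1 <> e2) :
  geom_equiv A (sum_act (cosets_coprod (Kset A)) (sum_act (one_act S) (one_act S))).
Proof.
apply: geq_of_sep.
- move=> a a' ne; have [s0 hs0] := get_s0 a'.
  exists (gmap HG HC (rho0_P2 HG HA a a' s0)
            (fun b _ => (inr (if excluded_middle_informative (b = a) then inl tt else inr tt)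
                 : sum_act (cosets_coprod (Kset A)) (sum_act (one_act S) (one_act S)))) inl).
  split.
  + apply: gmap_hom; first exact: rho0_P1.
    * move=> s b f f' /=; clear f'; rewrite (f s).
      by case: (excluded_middle_informative (b = a)).
    * by [].
  + rewrite /gmap.
    destruct (excluded_middle_informative (fixedp a)) as [f|nf];
    destruct (excluded_middle_informative (fixedp a')) as [f'|nf'] => //.
    * destruct (excluded_middle_informative (a = a)) as [ha|h]; last by case: h.
      destruct (excluded_middle_informative (a' = a)) as [h|h2] => //.
      by case: ne.
    * move=> h; apply: (core_sep HG HC HA _ _ _ ne hs0 nf nf').
      exact: (f_equal (fun z => match z with inl y => y | inr _ => hcore HG HC (rho0_P2 HG HA a a' s0) nf end) h).
- move=> x y ne; exists (F3 e1 e2); split.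
  + move=> s [z|[[]|[]]] /=; [exact: Fmap_hom | by rewrite f1 | by rewrite f2].
  + move: ne; case: x => [x|[[]|[]]]; case: y => [y|[[]|[]]] //= ne.
    all: first [ by move=> /(Fmap_inj HG HC) exy; case: ne; rewrite exy
               | by move=> ex; apply: (Fmap_nofix HG HC _ x); rewrite ex
               | by move=> ey; apply: (Fmap_nofix HG HC _ y); rewrite -ey
               | by move/esym ].
Qed.


Theorem theorem3p22 (S : monoid) (HG : is_group S) (HC : is_commutative S)
  (A : sact S) (HA : nonempty_act A) :
  (rep_type1 A \/ rep_type2 A \/ rep_type3 A) /\
  ~ (rep_type1 A /\ rep_type2 A) /\
  ~ (rep_type1 A /\ rep_type3 A) /\
  ~ (rep_type2 A /\ rep_type3 A).
Proof.
split; last exact: (exclusive HG HC A).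
case: (classic (exists e : A, fixedp e)) => [[e fe]|nofe].
- case: (classic (exists e', fixedp e' /\ e' <> e)) => [[e' [fe' ne]]|nu].
  + right; right; exists (Kset A); split; first exact: (Kset_proper HC A).
    exact: (type3_geq HG HC A HA e' e fe' fe ne).
  + right; left; exists (Kset A); split; first exact: (Kset_proper HC A).
    apply: (type2_geq HG HC A HA e fe) => b fb; apply: NNPP => nb; apply: nu.
    by exists b.
- left; have nofix : forall b : A, ~ fixedp b by move=> b fb; apply: nofe; exists b.
  exists (Kset A); split; [exact: (Kset_proper HC A) | | exact: (type1_geq HG HC A HA nofix)].
  case: HA => a; exists (stab a); exists a; split => //.
  apply: not_all_ex_not; exact: (nofix a).
Qed.
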